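(* Let $v=(v_j)_{j\in\mathbb{N}}\in\mathbb{R}^{\mathbb{N}}$, $\omega_0\in\mathbb{R}^n$ and $m\in\mathbb{N}$. If there exists an integer $i\ge1$ such that $CB^{m+1}P_{i-1}(v)\omega_0\neq0$, then there exists $k_0\in\mathbb{N}$ such that for every integer $N\ge1$, the map $\phi:\mathbb{R}^{k_0+N}\to\mathbb{R}^N$, \[ \phi(w)=\big(CB^mP_{k_0}(w)\omega_0,\dots,CB^mP_{k_0+N-1}(w)\omega_0\big), \] has a differential of rank $N$ at $(v_0,\dots,v_{k_0+N-1})$.
   Context: Let $n\ge1$, $A,B\in\mathrm{End}(\mathbb{R}^n)$, $C\in\mathcal{L}(\mathbb{R}^n,\mathbb{R})$. Polynomials have commuting scalar indeterminates $X_0,X_1,\dots$ and coefficients in $\mathrm{End}(\mathbb{R}^n)$. Define the linear map $\Psi$ by $\Psi(P)(X_0,\dots,X_k)=P(X_0,\dots,X_{k-1})(A+X_0B)+\sum_{i=0}^{k-1}\frac{\partial P}{\partial X_i}(X_0,\dots,X_{k-1})X_{i+1}$, where $k$ is the least $\ell$ such that $P$ involves only $X_0,\dots,X_{\ell-1}$. Let $P_0=I$ and $P_{k+1}=\Psi(P_k)$, so $P_k$ is a polynomial in $X_0,\dots,X_{k-1}$. For a polynomial $P$ in $X_0,\dots,X_{k-1}$ and a sequence (or vector with at least $k$ entries) $v$, $P(v)=P(v_0,\dots,v_{k-1})$. *)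

(* Defs.v *)
From HB Require Import structures.
From mathcomp Require Import all_boot all_order all_algebra.
From mathcomp Require Import all_classical all_reals all_analysis.
Set Implicit Arguments. Unset Strict Implicit. Unset Printing Implicit Defensive.
Import Order.TTheory GRing.Theory Num.Theory.
Local Open Scope ring_scope.

(* A polynomial in commuting scalar indeterminates X_0, X_1, ... with
   coefficients in End(R^n) = 'M[R]_n is represented as a finite formal sum
   of terms (c, e), meaning c * X_0^(e_0) * X_1^(e_1) * ...
   (e is a seq nat of exponents, missing exponents are 0). *)
Section Polys.
Variables (R : comRingType) (n : nat).

Definition term := ('M[R]_n * seq nat)%type.
Definition mpolyM := seq term.

Definition peval (P : mpolyM) (x : nat -> R) : 'M[R]_n :=
  \sum_(t <- P) ((\prod_(i < size t.2) x i ^+ nth 0%N t.2 i) *: t.1).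

Definition pderiv (i : nat) (P : mpolyM) : mpolyM :=
  [seq ((nth 0%N t.2 i)%:R *: t.1, set_nth 0%N t.2 i (nth 0%N t.2 i).-1) | t <- P].

Definition pmulX (j : nat) (P : mpolyM) : mpolyM :=
  [seq (t.1, incr_nth t.2 j) | t <- P].

Definition pmulAXB (A B : 'M[R]_n) (P : mpolyM) : mpolyM :=
  [seq (t.1 *m A, t.2) | t <- P] ++ [seq (t.1 *m B, incr_nth t.2 0) | t <- P].

(* Psi, for a polynomial P involving only X_0, ..., X_(k-1) *)
Definition Psi (A B : 'M[R]_n) (k : nat) (P : mpolyM) : mpolyM :=
  pmulAXB A B P ++ flatten [seq pmulX i.+1 (pderiv i P) | i <- iota 0 k].

Fixpoint Pk (A B : 'M[R]_n) (k : nat) : mpolyM :=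
  match k with
  | 0 => [:: (1%:M, [::])]
  | k'.+1 => Psi A B k' (Pk A B k')
  end.

Definition mxpow (B : 'M[R]_n) (m : nat) : 'M[R]_n := iter m (mulmx B) 1%:M.

Definition CBPw (C : 'M[R]_(1, n)) (B : 'M[R]_n) (m : nat) (P : mpolyM)
  (x : nat -> R) (w0 : 'cV[R]_n) : R :=
  (C *m mxpow B m *m peval P x *m w0) 0 0.

End Polys.

Definition seq_of_row (R : ringType) (K : nat) (w : 'rV[R]_K) : nat -> R :=
  fun j => match insub j with Some i => w 0 i | None => 0 end.

(* Main.v *)
Require Import Defs.
From HB Require Import structures.
From mathcomp Require Import all_boot all_order all_algebra.
From mathcomp Require Import all_classical all_reals all_analysis.
From mathcomp Require Import ring zify lra.
Import Order.TTheory GRing.Theory Num.Theory.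
Import numFieldNormedType.Exports.
Set Implicit Arguments. Unset Strict Implicit. Unset Printing Implicit Defensive.
Local Open Scope ring_scope.

Definition mono (R : comRingType) (s : seq nat) (x : nat -> R) : R :=
  \prod_(i < size s) x i ^+ nth 0%N s i.
Definition monoK (R : comRingType) (K : nat) (s : seq nat) (x : nat -> R) : R :=
  \prod_(i < K) x i ^+ nth 0%N s i.

Lemma mono_K (R : comRingType) K s (x : nat -> R) :
  (size s <= K)%N -> mono s x = monoK K s x.
Proof.
move=> h; rewrite /mono /monoK (big_ord_widen K (fun i => x i ^+ nth 0%N s i) h).
rewrite big_mkcond /=; apply: eq_bigr => i _; case: ltnP => // hi.
by rewrite nth_default // expr0.
Qed.

Lemma mono_eq (R : comRingType) s s' (x : nat -> R) :
  (forall i, nth 0%N s i = nth 0%N s' i) -> mono s x = mono s' x.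
Proof.
move=> h; rewrite (@mono_K _ (maxn (size s) (size s')) s x) ?leq_maxl //.
rewrite (@mono_K _ (maxn (size s) (size s')) s' x) ?leq_maxr //.
by apply: eq_bigr => i _; rewrite h.
Qed.

Lemma mono_incr (R : comRingType) s j (x : nat -> R) :
  mono (incr_nth s j) x = x j * mono s x.
Proof.
set K := maxn (size s) j.+1.
have h1 : (size (incr_nth s j) <= K)%N.
  by rewrite size_incr_nth; case: ifP => _; rewrite ?leq_maxl ?leq_maxr.
rewrite (mono_K x h1) (@mono_K _ K s x) ?leq_maxl // /monoK.
under eq_bigr do rewrite nth_incr_nth exprD.
rewrite big_split /=; congr (_ * _).
have hj : (j < K)%N by rewrite leq_maxr.
rewrite (bigD1 (Ordinal hj)) //= eqxx expr1 big1 ?mulr1 // => i /negbTE hi.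
case: (eqVneq j i) => [e|ne]; last by rewrite expr0.
have ei : i = Ordinal hj by apply/val_inj; rewrite /= e.
by rewrite ei eqxx in hi.
Qed.

Lemma mono_split (R : comRingType) s c (x : nat -> R) :
  mono s x = x c ^+ nth 0%N s c * mono (set_nth 0%N s c 0%N) x.
Proof.
set K := maxn (size s) c.+1.
have h1 : (size (set_nth 0%N s c 0%N) <= K)%N by rewrite size_set_nth maxnC.
rewrite (mono_K x h1) (@mono_K _ K s x) ?leq_maxl // /monoK.
have hc : (c < K)%N by rewrite leq_maxr.
rewrite (bigD1 (Ordinal hc)) //= [in RHS](bigD1 (Ordinal hc)) //=.
rewrite nth_set_nth /= eqxx expr0 mul1r; congr (_ * _).
apply: eq_bigr => i hi; rewrite nth_set_nth /=.
have [e|//] := eqVneq (i : nat) c.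
have ei : i = Ordinal hc by apply/val_inj; rewrite /= e.
by rewrite ei eqxx in hi.
Qed.

Lemma mono_set (R : comRingType) s c e (x : nat -> R) :
  mono (set_nth 0%N s c e) x = x c ^+ e * mono (set_nth 0%N s c 0%N) x.
Proof.
rewrite (mono_split _ c) nth_set_nth /= eqxx; congr (_ * _).
apply: mono_eq => i; rewrite !nth_set_nth /=.
by case: (eqVneq i c) => // ne; rewrite nth_set_nth /= (negbTE ne).
Qed.

Lemma mono_agree (R : comRingType) s (x y : nat -> R) :
  (forall i, (i < size s)%N -> x i = y i) -> mono s x = mono s y.
Proof. by move=> h; apply: eq_bigr => i _; rewrite h. Qed.

Lemma mono_indep (R : comRingType) s c (x y : nat -> R) :
  nth 0%N s c = 0%N -> (forall i, i != c -> x i = y i) -> mono s x = mono s y.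
Proof.
move=> h0 h; apply: eq_bigr => i _; have [->|ne] := eqVneq (i : nat) c.
  by rewrite h0 !expr0.
by rewrite h.
Qed.

Lemma pevalE (R : comRingType) n (P : mpolyM R n) x :
  peval P x = \sum_(t <- P) mono t.2 x *: t.1.
Proof. by []. Qed.

Lemma ev_cat (R : comRingType) n (P Q : mpolyM R n) x :
  peval (P ++ Q) x = peval P x + peval Q x.
Proof. by rewrite !pevalE big_cat. Qed.

Lemma ev_nil (R : comRingType) n x : peval (([::]) : mpolyM R n) x = 0.
Proof. by rewrite pevalE big_nil. Qed.

Lemma ev_pmulX (R : comRingType) n (P : mpolyM R n) j x :
  peval (pmulX j P) x = x j *: peval P x.
Proof.
rewrite !pevalE /pmulX big_map scaler_sumr; apply: eq_bigr => t _.
by rewrite /= mono_incr scalerA.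
Qed.

Definition rmul (R : comRingType) n (M : 'M[R]_n) (P : mpolyM R n) : mpolyM R n :=
  [seq (t.1 *m M, t.2) | t <- P].
Definition lmul (R : comRingType) n (M : 'M[R]_n) (P : mpolyM R n) : mpolyM R n :=
  [seq (M *m t.1, t.2) | t <- P].

Lemma ev_rmul (R : comRingType) n (M : 'M[R]_n) (P : mpolyM R n) x :
  peval (rmul M P) x = peval P x *m M.
Proof.
rewrite !pevalE /rmul big_map mulmx_suml; apply: eq_bigr => t _.
by rewrite /= scalemxAl.
Qed.

Lemma ev_lmul (R : comRingType) n (M : 'M[R]_n) (P : mpolyM R n) x :
  peval (lmul M P) x = M *m peval P x.
Proof.
rewrite !pevalE /lmul big_map mulmx_sumr; apply: eq_bigr => t _.
by rewrite /= scalemxAr.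
Qed.

Lemma pmulAXBE (R : comRingType) n (A B : 'M[R]_n) P :
  pmulAXB A B P = rmul A P ++ pmulX 0 (rmul B P).
Proof. by rewrite /pmulAXB /pmulX /rmul -map_comp. Qed.

Lemma ev_pmulAXB (R : comRingType) n (A B : 'M[R]_n) P x :
  peval (pmulAXB A B P) x = peval P x *m (A + x 0%N *: B).
Proof.
by rewrite pmulAXBE ev_cat ev_pmulX !ev_rmul mulmxDr scalemxAr.
Qed.

Lemma ev_flatten (R : comRingType) n (F : nat -> mpolyM R n) r x :
  peval (flatten [seq F i | i <- r]) x = \sum_(i <- r) peval (F i) x.
Proof.
elim: r => [|i r IH]; first by rewrite big_nil ev_nil.
by rewrite /= ev_cat IH big_cons.
Qed.

Lemma ev_Psi (R : comRingType) n (A B : 'M[R]_n) k P x :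
  peval (Psi A B k P) x = peval P x *m (A + x 0%N *: B)
     + \sum_(i <- iota 0 k) x i.+1 *: peval (pderiv i P) x.
Proof.
rewrite /Psi ev_cat ev_pmulAXB ev_flatten; congr (_ + _).
by apply: eq_bigr => i _; rewrite ev_pmulX.
Qed.

Lemma pderiv_cat (R : comRingType) n c (P Q : mpolyM R n) :
  pderiv c (P ++ Q) = pderiv c P ++ pderiv c Q.
Proof. by rewrite /pderiv map_cat. Qed.

Lemma pderiv_rmul (R : comRingType) n c M (P : mpolyM R n) :
  pderiv c (rmul M P) = rmul M (pderiv c P).
Proof.
rewrite /pderiv /rmul -!map_comp; apply: eq_map => t /=.
by rewrite scalemxAl.
Qed.

Lemma pderiv_lmul (R : comRingType) n c M (P : mpolyM R n) :
  pderiv c (lmul M P) = lmul M (pderiv c P).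
Proof.
rewrite /pderiv /lmul -!map_comp; apply: eq_map => t /=.
by rewrite scalemxAr.
Qed.

Lemma pderiv_flatten (R : comRingType) n c (F : nat -> mpolyM R n) r :
  pderiv c (flatten [seq F i | i <- r]) = flatten [seq pderiv c (F i) | i <- r].
Proof. by rewrite /pderiv map_flatten -map_comp. Qed.

Lemma pderiv_nil (R : comRingType) n c : pderiv c ([::] : mpolyM R n) = [::].
Proof. by []. Qed.

Lemma monoD (R : comRingType) s c (x : nat -> R) :
  (nth 0%N s c)%:R * (x c * mono (set_nth 0%N s c (nth 0%N s c).-1) x)
  = (nth 0%N s c)%:R * mono s x.
Proof.
rewrite mono_set [in RHS](mono_split _ c).
case: (nth 0%N s c) => [|a]; first by rewrite !mul0r.
by rewrite /= [x c ^+ a.+1]exprS !mulrA.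
Qed.

Lemma ev_pderiv_pmulX (R : comRingType) n c j (P : mpolyM R n) x :
  peval (pderiv c (pmulX j P)) x =
  x j *: peval (pderiv c P) x + (c == j)%:R *: peval P x.
Proof.
rewrite !pevalE /pderiv /pmulX -map_comp !big_map scaler_sumr scaler_sumr -big_split.
apply: eq_bigr => [[M s]] _ /=.
rewrite nth_incr_nth.
have [<-|ne] := eqVneq j c.
  rewrite /= add0n.
  have -> : mono (set_nth 0%N (incr_nth s j) j (nth 0%N s j)) x = mono s x.
    apply: mono_eq => i; rewrite nth_set_nth /= nth_incr_nth.
    by case: eqVneq => [->|] //; rewrite eq_sym => /negbTE ->.
  rewrite scale1r !scalerA -scalerDl; congr (_ *: _).
  have h := monoD s j x.
  rewrite natrD mulrDr mulr1 addrC; congr (_ + _).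
  by rewrite mulrC -h mulrC.
rewrite /= add0n scale0r addr0 !scalerA.
congr (_ *: _); congr (_ * _).
rewrite mono_set [in RHS]mono_set mulrCA; congr (_ * _).
rewrite -mono_incr; apply: mono_eq => i; rewrite !nth_set_nth /= !nth_incr_nth nth_set_nth /=.
by case: eqVneq => // ->; rewrite (negbTE ne).
Qed.

Lemma ev_pderiv_pmulAXB (R : comRingType) n (A B : 'M[R]_n) c P x :
  peval (pderiv c (pmulAXB A B P)) x =
  peval (pderiv c P) x *m (A + x 0%N *: B) + (c == 0%N)%:R *: (peval P x *m B).
Proof.
rewrite pmulAXBE pderiv_cat ev_cat ev_pderiv_pmulX pderiv_rmul !ev_rmul.
by rewrite pderiv_rmul ev_rmul mulmxDr scalemxAr addrA.
Qed.

Lemma ev_pderivC (R : comRingType) n c j (P : mpolyM R n) x :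
  peval (pderiv c (pderiv j P)) x = peval (pderiv j (pderiv c P)) x.
Proof.
rewrite !pevalE /pderiv -!map_comp !big_map; apply: eq_bigr => [[M s]] _ /=.
have [->|ne] := eqVneq c j; first by [].
rewrite !nth_set_nth /= (negbTE ne) eq_sym (negbTE ne) !scalerA.
set m1 := mono _ x; set m2 := mono _ x.
have -> : m1 = m2.
  apply: mono_eq => i; rewrite !nth_set_nth /= !nth_set_nth /=.
  case: (eqVneq i c) => [->|nic]; first by rewrite (negbTE ne).
  by case: (eqVneq i j).
by congr (_ *: _); ring.
Qed.

Definition cstp (R : comRingType) n (M : 'M[R]_n) : mpolyM R n := [:: (M, [::])].

Lemma ev_cstp (R : comRingType) n (M : 'M[R]_n) x : peval (cstp M) x = M.
Proof. by rewrite pevalE big_cons big_nil addr0 /mono big_ord0 scale1r. Qed.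

Lemma ev_pderiv_cstp (R : comRingType) n (M : 'M[R]_n) c x :
  peval (pderiv c (cstp M)) x = 0.
Proof. by rewrite pevalE big_cons big_nil addr0 /= nth_nil scale0r scaler0. Qed.

Definition szb (R : comRingType) n K (P : mpolyM R n) := all (fun t => size t.2 <= K)%N P.

Lemma ev_pderiv_small (R : comRingType) n c (P : mpolyM R n) x :
  szb c P -> peval (pderiv c P) x = 0.
Proof.
move=> /allP h; rewrite pevalE /pderiv big_map big1_seq // => t /andP [_ /h /= ht].
by rewrite nth_default // scale0r scaler0.
Qed.

Lemma ev_agree (R : comRingType) n K (P : mpolyM R n) x y :
  szb K P -> (forall i, (i < K)%N -> x i = y i) -> peval P x = peval P y.
Proof.
move=> /allP h hxy; rewrite !pevalE; apply: eq_big_seq => t /h /= ht.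
by rewrite (@mono_agree _ _ x y) // => i hi; apply: hxy; apply: leq_trans ht.
Qed.

Lemma szb_pderiv (R : comRingType) n K c (P : mpolyM R n) :
  szb K P -> (c < K)%N -> szb K (pderiv c P).
Proof.
move=> /allP h hc; apply/allP => t /mapP [[M s] /h /= hs ->] /=.
by rewrite size_set_nth geq_max hc.
Qed.

Lemma szb_Pk (R : comRingType) n (A B : 'M[R]_n) k : szb k (Pk A B k).
Proof.
elim: k => [|k IH] /=; first by [].
rewrite /Psi /szb all_cat; apply/andP; split.
  rewrite /pmulAXB all_cat; apply/andP; split; apply/allP => t /mapP [u hu ->] /=.
    by move/allP: IH => /(_ u hu) /= h; apply: leq_trans h _.
  rewrite size_incr_nth; case: ifP => _; last by [].
  by move/allP: IH => /(_ u hu) /= h; apply: leq_trans h _.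
apply/allP => t /flattenP [l /mapP [i hi ->]] /mapP [u hu ->] /=.
rewrite mem_iota add0n in hi; case/andP: hi => _ hi.
have := (szb_pderiv IH hi); move/allP => /(_ u hu) /= h.
by rewrite size_incr_nth; case: ifP => _ //; apply: leq_trans h _.
Qed.

Definition ellf (R : comRingType) n (u : 'rV[R]_n) (w : 'cV[R]_n) (M : 'M[R]_n) : R :=
  (u *m M *m w) 0 0.

Lemma ellf_ev (R : comRingType) n (u : 'rV[R]_n) (w : 'cV[R]_n) (P : mpolyM R n) x :
  ellf u w (peval P x) = \sum_(t <- P) ellf u w t.1 * mono t.2 x.
Proof.
rewrite /ellf pevalE mulmx_sumr mulmx_suml summxE; apply: eq_bigr => t _.
by rewrite -scalemxAr -scalemxAl mxE mulrC.
Qed.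

Lemma ellfZ (R : comRingType) n (u : 'rV[R]_n) (w : 'cV[R]_n) a M :
  ellf u w (a *: M) = a * ellf u w M.
Proof. by rewrite /ellf -scalemxAr -scalemxAl mxE. Qed.

Lemma ellfD (R : comRingType) n (u : 'rV[R]_n) (w : 'cV[R]_n) M N :
  ellf u w (M + N) = ellf u w M + ellf u w N.
Proof. by rewrite /ellf mulmxDr mulmxDl mxE. Qed.

Section Der.
Context {R : realType} {V : normedModType R}.

Lemma is_derive_prod0 (z v : V) k (F : nat -> V -> R) :
  (forall i, (i < k)%N -> is_derive z v (F i) 0) ->
  is_derive z v (fun y => \prod_(i < k) F i y) 0.
Proof.
elim: k => [|k IH] h.
  have -> : (fun y => \prod_(i < 0) F i y) = cst 1 by apply/funext => y; rewrite big_ord0.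
  exact: is_derive_cst.
have -> : (fun y => \prod_(i < k.+1) F i y) = (fun y => \prod_(i < k) F i y) * F k.
  by apply/funext => y; rewrite big_ord_recr.
have h1 := IH (fun i hi => h i (ltnW hi)).
have h2 := h k (ltnSn k).
have := is_deriveM h1 h2.
by rewrite !scaler0 addr0.
Qed.

Lemma is_derive_mono0 (z v : V) (X : V -> nat -> R) c s :
  (forall i, is_derive z v (fun y => X y i) (i == c)%:R) ->
  nth 0%N s c = 0%N ->
  is_derive z v (fun y => mono s (X y)) 0.
Proof.
move=> hX hs; apply: (@is_derive_prod0 z v (size s) (fun i y => X y i ^+ nth 0%N s i)).
move=> i _; have [->|ne] := eqVneq i c.
  rewrite hs; have -> : (fun y => X y c ^+ 0) = cst 1 by apply/funext => y; rewrite expr0.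
  exact: is_derive_cst.
have -> : (fun y => X y i ^+ nth 0%N s i) = (fun y => X y i) ^+ nth 0%N s i.
  by apply/funext => y; rewrite exprfctE.
have := is_deriveX (nth 0%N s i) (hX i).
by move=> h; apply: is_derive_eq h _; rewrite (negbTE ne) scaler0.
Qed.

Lemma is_derive_mono (z v : V) (X : V -> nat -> R) c s :
  (forall i, is_derive z v (fun y => X y i) (i == c)%:R) ->
  is_derive z v (fun y => mono s (X y))
    ((nth 0%N s c)%:R * mono (set_nth 0%N s c (nth 0%N s c).-1) (X z)).
Proof.
move=> hX.
have -> : (fun y => mono s (X y)) =
   (fun y => X y c) ^+ nth 0%N s c * (fun y => mono (set_nth 0%N s c 0%N) (X y)).
  by apply/funext => y; rewrite (mono_split _ c) /= exprfctE.
have h0 : is_derive z v (fun y => mono (set_nth 0%N s c 0%N) (X y)) 0.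
  by apply: (is_derive_mono0 hX); rewrite nth_set_nth /= eqxx.
have h1 := is_deriveX (nth 0%N s c) (hX c).
have := is_deriveM h1 h0.
rewrite scaler0 add0r eqxx => h; apply: is_derive_eq h _.
rewrite [in RHS]mono_set.
have sm : forall a b : R, a *: b = a * b by [].
rewrite !sm /= mulr1; ring.
Qed.

Lemma is_derive_ev (z v : V) (X : V -> nat -> R) c n (u : 'rV[R]_n) (w : 'cV[R]_n)
    (P : mpolyM R n) :
  (forall i, is_derive z v (fun y => X y i) (i == c)%:R) ->
  is_derive z v (fun y => ellf u w (peval P (X y)))
    (ellf u w (peval (pderiv c P) (X z))).
Proof.
move=> hX.
have -> : (fun y => ellf u w (peval P (X y))) =
   (fun y => \sum_(t <- P) ellf u w t.1 * mono t.2 (X y)).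
  by apply/funext => y; rewrite ellf_ev.
rewrite ellf_ev /pderiv big_map.
elim: P => [|t P IH].
  have -> : (fun y => \sum_(t <- [::]) ellf u w t.1 * mono t.2 (X y)) = cst 0.
    by apply/funext => y; rewrite big_nil.
  by rewrite big_nil; exact: is_derive_cst.
have -> : (fun y => \sum_(t0 <- t :: P) ellf u w t0.1 * mono t0.2 (X y)) =
  (fun y => ellf u w t.1 * mono t.2 (X y)) +
  (fun y => \sum_(t0 <- P) ellf u w t0.1 * mono t0.2 (X y)).
  by apply/funext => y; rewrite big_cons.
rewrite big_cons; apply: is_deriveD => //.
have -> : (fun y => ellf u w t.1 * mono t.2 (X y)) =
  (fun y => ellf u w t.1 *: mono t.2 (X y)) by [].
have := is_deriveZ (ellf u w t.1) (is_derive_mono t.2 hX).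
move=> h; apply: is_derive_eq h _.
have sm : forall a b : R, a *: b = a * b by [].
by rewrite /= ellfZ !sm; ring.
Qed.
End Der.

Lemma ellf_entry (R : comRingType) n (M : 'M[R]_n) a b :
  ellf (delta_mx 0 a) (delta_mx b 0) M = M a b.
Proof. by rewrite /ellf -rowE -colE !mxE. Qed.

Lemma is_derive_shift0 (R : realType) (a : R) :
  is_derive (0:R) (1:R) (fun h : R => a + h) 1.
Proof.
have -> : (fun h : R => a + h) = cst a + id by apply/funext => h.
have := is_deriveD (is_derive_cst a (0:R) (1:R)) (is_derive_id (0:R) (1:R)).
by rewrite add0r.
Qed.

Definition upd (R : ringType) (x : nat -> R) c (y : R) : nat -> R :=
  fun i => if i == c then y else x i.

Lemma cong_pderiv (R : realType) n (P Q : mpolyM R n) c :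
  (forall x, peval P x = peval Q x) ->
  forall x, peval (pderiv c P) x = peval (pderiv c Q) x.
Proof.
move=> h x; apply/matrixP => a b; rewrite -!ellf_entry.
set X := fun h : R => upd x c (x c + h).
have hX : forall i, is_derive (0 : R) (1 : R) (fun h => X h i) (i == c)%:R.
  move=> i; rewrite /X /upd; have [e|ne] := eqVneq i c.
    exact: is_derive_shift0.
  exact: is_derive_cst.
have X0 : X 0 = x by apply/funext => i; rewrite /X /upd addr0; case: eqVneq => // ->.
have hP := is_derive_ev (delta_mx 0 a) (delta_mx b 0) P hX.
have hQ := is_derive_ev (delta_mx 0 a) (delta_mx b 0) Q hX.
rewrite -X0.
have eP : 'D_1 (fun y => ellf (delta_mx 0 a) (delta_mx b 0) (peval P (X y))) 0 =
  ellf (delta_mx 0 a) (delta_mx b 0) (peval (pderiv c P) (X 0)) by apply: derive_val.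
have eQ : 'D_1 (fun y => ellf (delta_mx 0 a) (delta_mx b 0) (peval Q (X y))) 0 =
  ellf (delta_mx 0 a) (delta_mx b 0) (peval (pderiv c Q) (X 0)) by apply: derive_val.
rewrite -eP -eQ.
have -> : (fun y => ellf (delta_mx 0 a) (delta_mx b 0) (peval P (X y))) =
   (fun y => ellf (delta_mx 0 a) (delta_mx b 0) (peval Q (X y))).
  by apply/funext => y; rewrite h.
by [].
Qed.

Section Main.
Context {R : realType} {n : nat} (A B : 'M[R]_n).

Definition EQ (P Q : mpolyM R n) := forall x, peval P x = peval Q x.

Lemma EQ_pderiv P Q c : EQ P Q -> EQ (pderiv c P) (pderiv c Q).
Proof. exact: cong_pderiv. Qed.

Lemma EQ_trans P Q S : EQ P Q -> EQ Q S -> EQ P S.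
Proof. by move=> h1 h2 x; rewrite h1 h2. Qed.

Lemma EQ_cat P P' Q Q' : EQ P P' -> EQ Q Q' -> EQ (P ++ Q) (P' ++ Q').
Proof. by move=> h1 h2 x; rewrite !ev_cat h1 h2. Qed.

Lemma EQ_Psi k P Q : EQ P Q -> EQ (Psi A B k P) (Psi A B k Q).
Proof.
move=> h x; rewrite !ev_Psi h; congr (_ + _); apply: eq_bigr => i _.
by rewrite (EQ_pderiv i h).
Qed.

Lemma EQ_Psi_nil k P : EQ P [::] -> EQ (Psi A B k P) [::].
Proof.
move=> h x; rewrite ev_Psi h ev_nil mul0mx add0r big1 // => i _.
by rewrite (EQ_pderiv i h) pderiv_nil ev_nil scaler0.
Qed.

Lemma Psi_cat k P Q : EQ (Psi A B k (P ++ Q)) (Psi A B k P ++ Psi A B k Q).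
Proof.
move=> x; rewrite ev_cat !ev_Psi ev_cat mulmxDl.
under eq_bigr do rewrite pderiv_cat ev_cat scalerDr.
by rewrite big_split /= addrACA.
Qed.

Lemma sum_iota_ind (F : nat -> 'M[R]_n) c k :
  \sum_(i <- iota 0 k) (c == i)%:R *: F i = if (c < k)%N then F c else 0.
Proof.
elim: k => [|k IH]; first by rewrite big_nil.
rewrite -addn1 iotaD big_cat /= big_seq1 IH add0n.
have [->|ne] := eqVneq c k.
  by rewrite ltnn addn1 ltnSn scale1r add0r.
rewrite scale0r addr0 addn1 ltnS.
by rewrite [in RHS]leq_eqVlt (negbTE ne).
Qed.

Lemma ev_pderiv_Psi k c P x :
  peval (pderiv c (Psi A B k P)) x =
  peval (Psi A B k (pderiv c P)) x + (c == 0%N)%:R *: (peval P x *m B)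
  + (if (0 < c <= k)%N then peval (pderiv c.-1 P) x else 0).
Proof.
rewrite /Psi pderiv_cat ev_cat ev_pderiv_pmulAXB pderiv_flatten ev_flatten ev_cat.
rewrite ev_pmulAXB ev_flatten.
under eq_bigr do rewrite ev_pderiv_pmulX ev_pderivC.
rewrite big_split /=.
under [\sum_(i <- iota 0 k) peval (pmulX _ _) x]eq_bigr do rewrite ev_pmulX.
have -> : \sum_(i <- iota 0 k) (c == i.+1)%:R *: peval (pderiv i P) x =
          (if (0 < c <= k)%N then peval (pderiv c.-1 P) x else 0).
  case: c => [|c] /=.
    by rewrite big1 // => i _; rewrite scale0r.
  by rewrite (sum_iota_ind (fun i => peval (pderiv i P) x)).
set a := peval (pderiv c P) x *m _; set b := _ *: (_ *m B); set s1 := \sum_(i <- _) _.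
by rewrite addrACA -[RHS]addrA [b + _]addrC addrA.
Qed.
End Main.

Section Main2.
Context {R : realType} {n : nat} (A B : 'M[R]_n).
Local Notation P k := (Pk A B k).
Local Notation EQ := (@EQ R n).

Lemma szb_mono (P0 : mpolyM R n) K K' : szb K P0 -> (K <= K')%N -> szb K' P0.
Proof. by move=> /allP h hK; apply/allP => t /h /= ht; apply: leq_trans hK. Qed.

Lemma P_small k c : (k <= c)%N -> EQ (pderiv c (P k)) [::].
Proof.
move=> h x; rewrite ev_nil; apply: ev_pderiv_small.
exact: szb_mono (szb_Pk A B k) h.
Qed.

Lemma P_rec k l : (1 <= l <= k)%N ->
  EQ (pderiv (k.+1 - l) (P k.+1))
     (pderiv (k - l) (P k) ++ Psi A B k (pderiv (k.+1 - l) (P k))).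
Proof.
case/andP => h1 h2 x /=; rewrite ev_pderiv_Psi ev_cat.
have -> : (k.+1 - l == 0)%N = false by apply/negbTE; rewrite -lt0n subn_gt0 ltnS.
have -> : (0 < k.+1 - l <= k)%N.
  by rewrite subn_gt0 ltnS h2 /= leq_subLR -add1n leq_add2r.
have -> : (k.+1 - l).-1 = (k - l)%N by rewrite subSn.
by rewrite scale0r addr0 addrC.
Qed.

Lemma P_Q1 k : (1 <= k)%N -> EQ (pderiv k.-1 (P k)) (cstp B).
Proof.
elim: k => [//|k IH] _.
case: k IH => [_|k IH] x.
  rewrite (_ : P 1 = Psi A B 0 (P 0)) // ev_pderiv_Psi ev_cstp.
  rewrite (EQ_Psi_nil _ _ _ (P_small (leqnn 0))) ev_nil add0r scale1r addr0.
  by rewrite /peval big_cons big_nil addr0 /mono big_ord0 scale1r mul1mx.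
have := P_rec (k := k.+1) (l := 1) isT x.
rewrite !subn1 /= => ->.
rewrite ev_cat (EQ_Psi_nil _ _ _ (P_small (leqnn k.+1))) ev_nil addr0.
exact: IH.
Qed.

Lemma pderiv_Psi_nil k j Q :
  EQ (pderiv j Q) [::] -> ((j == 0)%N -> EQ Q [::]) ->
  ((0 < j)%N -> EQ (pderiv j.-1 Q) [::]) -> EQ (pderiv j (Psi A B k Q)) [::].
Proof.
move=> h1 h2 h3 x; rewrite ev_pderiv_Psi (EQ_Psi_nil _ _ _ h1) ev_nil add0r.
case: (posnP j) => [j0|jp].
  by rewrite h2 ?j0 // ev_nil mul0mx scaler0 add0r.
rewrite scale0r add0r /=.
by case: ifP => // _; rewrite h3 // ev_nil.
Qed.

Lemma EQ_nil_pderiv Q j : EQ Q [::] -> EQ (pderiv j Q) [::].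
Proof. by move=> h x; rewrite (EQ_pderiv j h). Qed.

Lemma P_supp l k : (1 <= l <= k)%N ->
  forall j, (l.-1 <= j)%N -> EQ (pderiv j (pderiv (k - l) (P k))) [::].
Proof.
elim: l k => [//|l IHl] k /andP [_ hk].
rewrite -(subnKC hk); move: (k - l.+1)%N => m; clear hk.
elim: m => [|m IHm] j hj.
  rewrite addn0 subnn => x; rewrite ev_pderivC.
  case: (ltngtP j l.+1) => hjl.
  - have ej : j = l by apply/eqP; rewrite eqn_leq hj -ltnS hjl.
    have hq : EQ (pderiv l (P l.+1)) (cstp B) := P_Q1 (k := l.+1) isT.
    rewrite ej (EQ_pderiv 0 hq) ev_pderiv_cstp.
    by rewrite ev_nil.
  - by rewrite (EQ_pderiv 0 (P_small (ltnW hjl))) pderiv_nil.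
  - by rewrite (EQ_pderiv 0 (P_small (eq_leq (esym hjl)))) pderiv_nil.
rewrite addnS.
have hr := P_rec (k := (l.+1 + m)%N) (l := l.+1).
apply: EQ_trans (EQ_pderiv j (hr _)) _; first by rewrite /= leq_addr.
suff H : EQ (pderiv j (Psi A B (l.+1 + m) (pderiv (l.+1 + m - l) (P (l.+1 + m))))) [::].
  by move=> x; rewrite pderiv_cat ev_cat (IHm j hj x) subSS (H x) !ev_nil addr0.
clear IHm hr.
apply: pderiv_Psi_nil.
- case: l IHl hj => [_ hj|l IHl hj].
    by apply: EQ_nil_pderiv; apply: P_small; rewrite subn0.
  by apply: IHl => //; lia.
- case: l IHl hj => [_ hj _|l IHl hj].
    by apply: P_small; rewrite subn0.
  by case: j hj.
- case: l IHl hj => [_ hj _|l IHl hj jp].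
    by apply: EQ_nil_pderiv; apply: P_small; rewrite subn0.
  apply: IHl; first by lia.
  by case: j hj jp.
Qed.


Lemma PSIK K0 K Q : (forall j, (K0 <= j)%N -> EQ (pderiv j Q) [::]) -> (K0 <= K)%N ->
  EQ (Psi A B K Q) (Psi A B K0 Q).
Proof.
move=> h hK x; rewrite !ev_Psi -(subnKC hK) iotaD big_cat /= add0n.
rewrite [X in _ + (_ + X)]big1_seq ?addr0 // => j /andP [_].
rewrite mem_iota => /andP [hj _].
by rewrite (h j hj) ev_nil scaler0.
Qed.

Lemma Psi_lmul k M Q : EQ (Psi A B k (lmul M Q)) (lmul M (Psi A B k Q)).
Proof.
move=> x; rewrite ev_lmul !ev_Psi ev_lmul mulmxDr mulmxA; congr (_ + _).
rewrite mulmx_sumr; apply: eq_bigr => i _.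
by rewrite pderiv_lmul ev_lmul scalemxAr.
Qed.

Fixpoint Gm d : mpolyM R n :=
  match d with 0 => cstp B | d'.+1 => Psi A B d' (Gm d') end.

Lemma Gm_lmul d : EQ (Gm d) (lmul B (P d)).
Proof.
elim: d => [|d IH] x.
  rewrite (_ : Gm 0 = cstp B) // ev_cstp ev_lmul.
  by rewrite /peval big_cons big_nil addr0 /mono big_ord0 scale1r mulmx1.
rewrite (_ : Gm d.+1 = Psi A B d (Gm d)) // (_ : P d.+1 = Psi A B d (P d)) //.
by rewrite (EQ_Psi A B d IH x) (Psi_lmul d B (P d) x).
Qed.

Definition adm (L : mpolyM R n -> R) :=
  (forall P0 Q, EQ P0 Q -> L P0 = L Q) /\ (forall P0 Q, L (P0 ++ Q) = L P0 + L Q).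

Lemma adm_Psi d L : adm L -> adm (fun Q => L (Psi A B d Q)).
Proof.
case=> h1 h2; split=> [P0 Q h|P0 Q].
  by apply: h1; apply: EQ_Psi.
by rewrite -h2; apply: h1; apply: Psi_cat.
Qed.

Definition dif (a : nat -> R) : nat -> R := fun k => a k.+1 - a k.

Lemma iter_dif_ev (a b : nat -> R) k1 :
  (forall k, (k1 <= k)%N -> a k = b k) ->
  forall d k, (k1 <= k)%N -> iter d dif a k = iter d dif b k.
Proof.
move=> h d; elim: d => [|d IH] k hk /=; first exact: h.
by rewrite /dif !IH // (leq_trans hk).
Qed.

Lemma POLY d L : adm L -> exists k1, forall k, (k1 <= k)%N ->
  iter d dif (fun k => L (pderiv (k - d.+1) (P k))) k = L (Gm d).
Proof.
elim: d L => [|d IH] L hL.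
  exists 1%N => k hk /=; rewrite subn1; apply: hL.1.
  exact: P_Q1.
have [k1 hk1] := IH _ (adm_Psi d hL).
exists (maxn k1 d.+2) => k; rewrite geq_max => /andP [hk1k hdk].
have E : forall k', (d.+2 <= k')%N ->
   dif (fun k => L (pderiv (k - d.+2) (P k))) k' =
   (fun k => L (Psi A B d (pderiv (k - d.+1) (P k)))) k'.
  move=> k' hk'; rewrite /dif.
  have hr := P_rec (k := k') (l := d.+2).
  rewrite (hL.1 _ _ (hr _)); last by rewrite /= hk'.
  rewrite hL.2 addrAC subrr add0r subSS; apply: hL.1.
  apply: PSIK; last by apply: leq_trans hk'; apply: leq_trans (leqnSn _) _.
  move=> j hj; apply: P_supp => //.
  by rewrite /= (leq_trans _ hk').
rewrite iterSr (iter_dif_ev E) //.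
by rewrite hk1.
Qed.
End Main2.

Definition EZ (R : realType) (a : nat -> R) := exists k2, forall k, (k2 <= k)%N -> a k = 0.
Definition EP (R : realType) (a : nat -> R) :=
  exists e, 0 < e /\ exists k2, forall k, (k2 <= k)%N -> e <= a k.

Lemma dif_growth (R : realType) (b : nat -> R) e k2 : 0 < e ->
  (forall k, (k2 <= k)%N -> e <= dif b k) -> EP b.
Proof.
move=> e0 h.
have hg : forall t, b k2 + t%:R * e <= b (k2 + t)%N.
  elim=> [|t IH]; first by rewrite mul0r addr0 addn0.
  have := h (k2 + t)%N (leq_addr _ _); rewrite /dif addnS => h2.
  rewrite -natr1 mulrDl mul1r addrA; lra.
set N := Num.Def.archi_bound (`|e - b k2| / e).
have hN : `|e - b k2| / e < N%:R by apply: archi_boundP; rewrite divr_ge0 // ltW.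
exists e; split => //; exists (k2 + N)%N => k hk.
rewrite -(subnKC hk) -addnA; set t := (N + (k - (k2 + N)))%N.
apply: le_trans (hg t).
have : `|e - b k2| < N%:R * e by rewrite -ltr_pdivrMr.
have : N%:R * e <= t%:R * e by rewrite ler_pM2r // ler_nat /t leq_addr.
have := ler_norm (e - b k2).
lra.
Qed.

Lemma TRI0 (R : realType) (a : nat -> R) c k1 :
  (forall k, (k1 <= k)%N -> a k = c) -> EZ a \/ EP a \/ EP (fun k => - a k).
Proof.
move=> h; case: (ltrgtP c 0) => hc.
- right; right; exists (- c); split; first by rewrite oppr_gt0.
  by exists k1 => k hk; rewrite h.
- right; left; exists c; split => //; exists k1 => k hk; by rewrite h.
- left; exists k1 => k hk; by rewrite h.
Qed.

Lemma TRI d (R : realType) (a : nat -> R) c k1 :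
  (forall k, (k1 <= k)%N -> iter d dif a k = c) -> EZ a \/ EP a \/ EP (fun k => - a k).
Proof.
elim: d a c k1 => [|d IH] a c k1 h; first exact: (TRI0 h).
have h' : forall k, (k1 <= k)%N -> iter d dif (dif a) k = c by move=> k hk; rewrite -iterSr h.
case: (IH _ _ _ h') => [[k2 hk2]|[[e [e0 [k2 hk2]]]|[e [e0 [k2 hk2]]]]].
- apply: (@TRI0 _ _ (a k2) k2) => k hk.
  rewrite -(subnKC hk); elim: (k - k2)%N => [|t IHt]; first by rewrite addn0.
  by have := hk2 (k2 + t)%N (leq_addr _ _); rewrite /dif addnS IHt => /eqP; rewrite subr_eq0 => /eqP.
- by right; left; apply: (dif_growth e0 hk2).
- right; right; apply: (dif_growth e0) => k hk.
  by have := hk2 k hk; rewrite /dif; lra.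
Qed.

Lemma EP_nz (R : realType) (a : nat -> R) : EP a -> exists k2, forall k, (k2 <= k)%N -> a k != 0.
Proof.
case=> e [e0 [k2 h]]; exists k2 => k hk; have := h k hk.
by move=> H; apply/eqP => a0; rewrite a0 in H; lra.
Qed.

Lemma TRI_nz d (R : realType) (a : nat -> R) c k1 :
  (forall k, (k1 <= k)%N -> iter d dif a k = c) -> ~ EZ a ->
  exists k2, forall k, (k2 <= k)%N -> a k != 0.
Proof.
move=> h nz; case: (TRI h) => [//|[/EP_nz //|/EP_nz [k2 hk]]].
by exists k2 => k /hk; rewrite oppr_eq0.
Qed.

Lemma iter_dif0 (R : realType) d k : iter d (@dif R) (fun=> 0) k = 0.
Proof. by elim: d k => [|d IH] k //=; rewrite /dif !IH subrr. Qed.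

Lemma NZ d (R : realType) (a : nat -> R) c k1 :
  (forall k, (k1 <= k)%N -> iter d dif a k = c) -> c != 0 -> ~ EZ a.
Proof.
move=> h c0 [k2 hk2].
have := @iter_dif_ev R a (fun=> 0) k2 hk2 d (maxn k1 k2) (leq_maxr _ _).
by rewrite iter_dif0 h ?leq_maxl // => c00; rewrite c00 eqxx in c0.
Qed.

Lemma ex_min (P : nat -> Prop) m : P m ->
  exists l, P l /\ (forall l', (l' < l)%N -> ~ P l').
Proof.
suff : forall N m, (m <= N)%N -> P m -> exists l, P l /\ (forall l', (l' < l)%N -> ~ P l').
  by move=> H; apply: (H m).
elim=> [|N IH] {}m hm pm.
  exists m; split => // l'; rewrite leqn0 in hm; by rewrite (eqP hm).
case: (pselect (exists m', (m' < m)%N /\ P m')) => [[m' [hm' pm']]|nex].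
  by apply: (IH m') => //; rewrite -ltnS (leq_trans hm').
by exists m; split => // l' hl' pl'; apply: nex; exists l'.
Qed.

Lemma unif_zero (R : realType) (a : nat -> nat -> R) L :
  (forall l, (1 <= l < L)%N -> EZ (a l)) ->
  exists k1, forall l, (1 <= l < L)%N -> forall k, (k1 <= k)%N -> a l k = 0.
Proof.
elim: L => [|L IH] h; first by exists 0%N => l; rewrite ltn0 andbF.
have [k1 hk1] : exists k1, forall l, (1 <= l < L)%N -> forall k, (k1 <= k)%N -> a l k = 0.
  by apply: IH => l /andP [h1 h2]; apply: h; rewrite h1 ltnS ltnW.
case: (posnP L) => [L0|Lp].
  exists k1 => l /andP [h1 h2] k hk; apply: hk1 => //; rewrite h1 /=.
  by move: h2; rewrite L0 ltnS leqn0 => /eqP l0; rewrite l0 in h1.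
have [k2 hk2] := h L (introT andP (conj Lp (ltnSn L))).
exists (maxn k1 k2) => l /andP [h1 h2] k; rewrite geq_max => /andP [hk1' hk2'].
move: h2; rewrite ltnS leq_eqVlt => /orP [/eqP ->|hl].
  exact: hk2.
by apply: hk1 => //; rewrite h1.
Qed.

Section Anal.
Context {R : realType} {V : normedModType R}.

Lemma differentiable_prod (z : V) k (F : nat -> V -> R) :
  (forall i, (i < k)%N -> differentiable (F i) z) ->
  differentiable (fun y => \prod_(i < k) F i y) z.
Proof.
elim: k => [|k IH] h.
  have -> : (fun y => \prod_(i < 0) F i y) = cst 1 by apply/funext => y; rewrite big_ord0.
  exact: differentiable_cst.
have -> : (fun y => \prod_(i < k.+1) F i y) = (fun y => \prod_(i < k) F i y) * F k.
  by apply/funext => y; rewrite big_ord_recr.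
apply: differentiableM; first exact: (IH (fun i hi => h i (ltnW hi))).
exact: h.
Qed.

Lemma differentiable_ev (z : V) (X : V -> nat -> R) n (u : 'rV[R]_n) (w : 'cV[R]_n)
    (P : mpolyM R n) :
  (forall i, differentiable (fun y => X y i) z) ->
  differentiable (fun y => ellf u w (peval P (X y))) z.
Proof.
move=> hX.
have -> : (fun y => ellf u w (peval P (X y))) =
   (fun y => \sum_(t <- P) ellf u w t.1 * mono t.2 (X y)).
  by apply/funext => y; rewrite ellf_ev.
elim: P => [|t P IH].
  have -> : (fun y => \sum_(t <- [::]) ellf u w t.1 * mono t.2 (X y)) = cst 0.
    by apply/funext => y; rewrite big_nil.
  exact: differentiable_cst.
have -> : (fun y => \sum_(t0 <- t :: P) ellf u w t0.1 * mono t0.2 (X y)) =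
  (fun y => ellf u w t.1 * mono t.2 (X y)) +
  (fun y => \sum_(t0 <- P) ellf u w t0.1 * mono t0.2 (X y)).
  by apply/funext => y; rewrite big_cons.
apply: differentiableD => //.
have -> : (fun y => ellf u w t.1 * mono t.2 (X y)) =
  (cst (ellf u w t.1)) * (fun y => mono t.2 (X y)) by [].
apply: differentiableM; first exact: differentiable_cst.
apply: (@differentiable_prod z (size t.2) (fun i y => X y i ^+ nth 0%N t.2 i)) => i _.
case: (nth 0%N t.2 i) => [|e].
  have -> : (fun y => X y i ^+ 0) = cst 1 by apply/funext => y; rewrite expr0.
  exact: differentiable_cst.
have -> : (fun y => X y i ^+ e.+1) = (fun y => X y i) ^+ e.+1.
  by apply/funext => y; rewrite exprfctE.
exact: differentiableX.
Qed.
End Anal.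

Lemma seq_of_row_diff (R : realType) K (p : 'rV[R]_K) i :
  differentiable (fun w : 'rV[R]_K => seq_of_row w i) p.
Proof.
rewrite /seq_of_row; case: insubP => [ o _ _|_].
  exact: differentiable_coord.
exact: differentiable_cst.
Qed.

Lemma seq_of_row_derive (R : realType) K (p : 'rV[R]_K) (c : 'I_K) i :
  is_derive p (delta_mx 0 c) (fun w : 'rV[R]_K => seq_of_row w i) (i == c)%:R.
Proof.
rewrite /seq_of_row; case: insubP => [ o _ ho|hi].
  have d := @diff_derivable _ _ _ _ p (delta_mx 0 c) (differentiable_coord p 0 o).
  apply: is_derive_eq (derivableP d) _.
  have hid : derivable (id : 'rV[R]_K -> 'rV[R]_K) p (delta_mx 0 c) by [].
  have := derive_mx hid; rewrite derive_id => /matrixP /(_ 0 o).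
  rewrite !mxE => <-; rewrite -ho.
  by [].
have -> : (i == c) = false.
  by apply/negbTE; apply: contraNN hi => /eqP ->; exact: ltn_ord.
exact: is_derive_cst.
Qed.

Lemma mxpowS (R : comRingType) n (B : 'M[R]_n) m : mxpow B m.+1 = mxpow B m *m B.
Proof.
have comm : forall k, B *m mxpow B k = mxpow B k *m B.
  elim=> [|k IH]; first by rewrite /mxpow /= mulmx1 mul1mx.
  have -> : mxpow B k.+1 = B *m mxpow B k by [].
  by rewrite [in LHS]IH mulmxA.
by rewrite -comm.
Qed.

Lemma ellf0 (R : comRingType) n (u : 'rV[R]_n) (w : 'cV[R]_n) : ellf u w 0 = 0.
Proof. by rewrite /ellf mulmx0 mul0mx mxE. Qed.

Unset Implicit Arguments.
Unset Strict Implicit.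

Theorem corollary4 (R : realType) (n : nat) (hn : (1 <= n)%N)
  (A B : 'M[R]_n) (C : 'M[R]_(1, n)) (v : nat -> R) (w0 : 'cV[R]_n) (m : nat) :
  (exists i : nat, (1 <= i)%N /\ CBPw C B m.+1 (Pk A B i.-1) v w0 != 0) ->
  exists k0 : nat, forall N : nat, (1 <= N)%N ->
    let phi := fun w : 'rV[R]_(k0 + N) =>
      \row_(j < N) CBPw C B m (Pk A B (k0 + j)) (seq_of_row w) w0 in
    let p := \row_(j < k0 + N) v j in
    differentiable phi p /\ \rank (lin1_mx ('d phi p)) = N.
Proof.
case=> i [hi hg].
set u := C *m mxpow B m.
pose L0 := fun Q : mpolyM R n => ellf u w0 (peval Q v).
have hL : adm L0.
  split => [P0 Q h|P0 Q]; first by rewrite /L0 h.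
  by rewrite /L0 ev_cat ellfD.
pose a := fun l k => L0 (pderiv (k - l) (Pk A B k)).
have Hpoly : forall d, exists k1, forall k, (k1 <= k)%N ->
    iter d dif (a d.+1) k = L0 (Gm A B d).
  by move=> d; apply: POLY.
have hgam : L0 (Gm A B i.-1) = CBPw C B m.+1 (Pk A B i.-1) v w0.
  rewrite /L0 (Gm_lmul A B i.-1 v) ev_lmul /ellf /CBPw /u mxpowS.
  by rewrite !mulmxA.
have nEZ : ~ EZ (a i).
  have [k1 hk1] := Hpoly i.-1; rewrite prednK // in hk1.
  by apply: (NZ hk1); rewrite hgam.
have [ls [[ls1 nz] hmin]] := ex_min (P := fun l => (1 <= l)%N /\ ~ EZ (a l)) (conj hi nEZ).
have hz : forall l, (1 <= l < ls)%N -> EZ (a l).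
  move=> l /andP [h1 h2]; case: (pselect (EZ (a l))) => // ne.
  by exfalso; apply: (hmin l h2).
have [k1 hk1] := unif_zero hz.
have [k2 hk2] : exists k2, forall k, (k2 <= k)%N -> a ls k != 0.
  have [k3 hk3] := Hpoly ls.-1; rewrite prednK // in hk3.
  exact: (TRI_nz hk3 nz).
exists (maxn (maxn k1 k2) ls) => N hN phi p.
set k0 := maxn (maxn k1 k2) ls.
have hk01 : (k1 <= k0)%N by rewrite /k0 !leq_max leqnn.
have hk02 : (k2 <= k0)%N by rewrite /k0 !leq_max leqnn orbT.
have hk0l : (ls <= k0)%N by rewrite /k0 !leq_max leqnn orbT.
pose f := fun (j : 'I_N) (w : 'rV[R]_(k0 + N)) =>
  CBPw C B m (Pk A B (k0 + j)) (seq_of_row w) w0.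
have hf : forall j, differentiable (f j) p.
  move=> j; apply: (@differentiable_ev _ _ p (fun w => seq_of_row w) n u w0).
  by move=> i'; apply: seq_of_row_diff.
have hphi : phi = \sum_(j < N) (fun w => f j w *: (delta_mx 0 j : 'rV[R]_N)).
  apply/funext => w; rewrite fct_sumE; apply/rowP => j.
  rewrite /phi mxE summxE (bigD1 j) //= !mxE !eqxx /= mulr1 big1 ?addr0 // => j' hj'.
  by rewrite !mxE eq_sym (negbTE hj') andbF mulr0.
have dphi : differentiable phi p.
  rewrite hphi; apply: differentiable_sum => j; apply: differentiableZl; exact: hf.
split => //.
have Jc : forall (c : 'I_(k0 + N)) (j : 'I_N),
    lin1_mx ('d phi p) c j = L0 (pderiv c (Pk A B (k0 + j))).
  move=> c j; rewrite mxE -deriveE // derive_mx ?mxE; last exact: diff_derivable.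
  have -> : (fun t => phi t 0 j) =
      (fun w => ellf u w0 (peval (Pk A B (k0 + j)) (seq_of_row w))).
    by apply/funext => w; rewrite /phi mxE.
  have hd := is_derive_ev u w0 (Pk A B (k0 + j)) (seq_of_row_derive p c).
  rewrite derive_val.
  rewrite /L0; congr (ellf u w0 _); apply: (@ev_agree _ _ (k0 + N)%N).
    apply: szb_pderiv => //; apply: szb_mono (szb_Pk A B _) _.
    by rewrite leq_add2l ltnW.
  move=> i' hi'; rewrite /seq_of_row; case: insubP => [ o _ ho|]; last by rewrite hi'.
  by rewrite /p mxE ho.
have Z1 : forall c (j : nat), (k0 + j <= c)%N -> L0 (pderiv c (Pk A B (k0 + j))) = 0.
  by move=> c j h; rewrite /L0 (P_small A B h v) ev_nil ellf0.
have Z2 : forall c (j : nat), (c < k0 + j)%N -> (k0 + j - c < ls)%N ->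
    L0 (pderiv c (Pk A B (k0 + j))) = 0.
  move=> c j h1 h2.
  have := hk1 (k0 + j - c)%N _ (k0 + j)%N _; rewrite /a subKn ?(ltnW h1) //; apply.
    by rewrite h2 subn_gt0 h1.
  exact: leq_trans hk01 (leq_addr _ _).
set J := lin1_mx ('d phi p).
have fo : forall b : 'I_N, (k0 + b - ls < k0 + N)%N.
  move=> b; have := ltn_ord b; lia.
pose g := fun b : 'I_N => Ordinal (fo b).
have E : forall b b', (rowsub g J)^T b b' = J (g b') b by move=> b b'; rewrite !mxE.
have rS : \rank (rowsub g J) = N.
  apply: mxrank_unit; rewrite unitmxE unitfE -det_tr det_trig.
    apply/prodf_neq0 => b _; rewrite E /J Jc /=.
    exact: hk2 _ (leq_trans hk02 (leq_addr _ _)).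
  apply/is_trig_mxP => b b' hbb; rewrite E /J Jc /=.
  case: (leqP (k0 + b) (k0 + b' - ls)) => h; first exact: Z1.
  apply: Z2 => //; lia.
apply/eqP; rewrite eqn_leq rank_leq_col /= -{1}rS; apply: mxrankS.
exact: rowsub_sub.
Qed.
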